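(* Consider a tree power network $(\mathcal{V},\mathcal{E})$, $\mathcal{V}=\{1,\dots,n\}$, with angle limits $\underline{\theta}_{ik}\le\overline{\theta}_{ik}$ satisfying $|\underline{\theta}_{ik}|,|\overline{\theta}_{ik}|<90^\circ$, $\underline{\theta}_{ik}\le 0\le\overline{\theta}_{ik}$, and bus power upper bounds $P_i\le\overline{P}_i$ (no lower bounds). Then for every $\tilde{\mathbf{v}}\in\mathbb{R}^n_{>0}$: (a) $\mathcal{O}(\mathcal{P}_\theta(\tilde{\mathbf{v}}))=\mathcal{O}(\overline{\mathrm{conv}}(\mathcal{P}_\theta(\tilde{\mathbf{v}})))$; (b) $\mathcal{O}(\mathcal{P}(\tilde{\mathbf{v}}))=\mathcal{O}(\overline{\mathrm{conv}}(\mathcal{P}_\theta(\tilde{\mathbf{v}}))\cap\mathcal{P}_P)$; and for any $0<\underline{\mathbf{v}}\le\overline{\mathbf{v}}$ in $\mathbb{R}^n$, (c) $\bigcup_{\underline{\mathbf{v}}\le\tilde{\mathbf{v}}\le\overline{\mathbf{v}}}\overline{\mathrm{conv}}(\mathcal{P}_\theta(\tilde{\mathbf{v}}))$ is a convex set.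
   Context: Each line $(i,k)$ has admittance $y_{ik}=g_{ik}-jb_{ik}$, $g_{ik},b_{ik}\ge0$. For fixed voltage magnitudes $|V_i|=\tilde V_i$, the flows on line $(i,k)$ with $\theta_{ik}=\theta_i-\theta_k$ are $P_{ik}=\tilde V_i^2 g_{ik}+\tilde V_i\tilde V_k b_{ik}\sin\theta_{ik}-\tilde V_i\tilde V_k g_{ik}\cos\theta_{ik}$, $P_{ki}=\tilde V_k^2 g_{ik}-\tilde V_i\tilde V_k b_{ik}\sin\theta_{ik}-\tilde V_i\tilde V_k g_{ik}\cos\theta_{ik}$; $\mathcal{F}_{\theta_{ik}}(\tilde{\mathbf{v}})$ is the set of such $(P_{ik},P_{ki})$ for $\theta_{ik}\in[\underline{\theta}_{ik},\overline{\theta}_{ik}]$. $\mathbf{A}$ is the $n\times2|\mathcal{E}|$ matrix with $A(i,(k,l))=1$ if $i=k$ and $0$ otherwise (so $(\mathbf{A}\mathbf{f})_i=\sum_{k\sim i}P_{ik}$). $\mathcal{P}_\theta(\tilde{\mathbf{v}})=\mathbf{A}\prod_{(i,k)\in\mathcal{E}}\mathcal{F}_{\theta_{ik}}(\tilde{\mathbf{v}})$, $\mathcal{P}_P=\{\mathbf{p}:P_i\le\overline{P}_i\ \forall i\}$, $\mathcal{P}(\tilde{\mathbf{v}})=\mathcal{P}_\theta(\tilde{\mathbf{v}})\cap\mathcal{P}_P$. For a Hermitian $n\times n$ matrix $\mathbf{W}$, $W_{ik}$ is its $(i,k)$ entry and $\mathbf{W}_{ik}$ its $2\times2$ submatrix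 on rows/columns $i,k$. Let $\mathcal{H}_{ik}(\tilde{\mathbf{v}})$ be the set of Hermitian $\mathbf{W}$ with $\mathbf{W}_{ik}$ positive semidefinite, $W_{ii}=\tilde V_i^2$, $W_{kk}=\tilde V_k^2$, and $\tan(\underline{\theta}_{ik})\,\mathrm{Re}(W_{ik})\le\mathrm{Im}(W_{ik})\le\tan(\overline{\theta}_{ik})\,\mathrm{Re}(W_{ik})$. With $\mathbf{Y}_{ik}=\begin{bmatrix}y_{ik}&-y_{ik}\\-y_{ik}&y_{ik}\end{bmatrix}$, define $\overline{\mathrm{conv}}(\mathcal{F}_{\theta_{ik}}(\tilde{\mathbf{v}}))=\{\mathrm{Re}(\mathrm{diag}(\mathbf{W}_{ik}\mathbf{Y}_{ik}^H)):\mathbf{W}\in\mathcal{H}_{ik}(\tilde{\mathbf{v}})\}\subset\mathbb{R}^2$ (interpreted as a pair $(P_{ik},P_{ki})$), $\overline{\mathrm{conv}}(\mathcal{F}_\theta(\tilde{\mathbf{v}}))=\prod_{(i,k)}\overline{\mathrm{conv}}(\mathcal{F}_{\theta_{ik}}(\tilde{\mathbf{v}}))$ and $\overline{\mathrm{conv}}(\mathcal{P}_\theta(\tilde{\mathbf{v}}))=\mathbf{A}\,\overline{\mathrm{conv}}(\mathcal{F}_\theta(\tilde{\mathbf{v}}))$. For $\mathcal{A}\subseteq\mathbb{R}^m$, $\mathcal{O}(\mathcal{A})$ is the set of Pareto-optimal points (no $y\in\mathcal{A}$ with $y\le x$ componentwise, strict in some coordinate). *)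

(* Defs.v *)
From HB Require Import structures.
From mathcomp Require Import all_boot all_order all_algebra.
From mathcomp Require Import all_classical all_reals.
From mathcomp Require Import trigo.
From mathcomp Require Import complex.
Set Implicit Arguments. Unset Strict Implicit. Unset Printing Implicit Defensive.
Import Order.TTheory GRing.Theory Num.Theory.
Local Open Scope classical_set_scope.
Local Open Scope ring_scope.
Local Open Scope complex_scope.

Section PowerNetwork.
Variables (R : realType) (n : nat).

(* Network on buses 'I_n (= {1,...,n}); each line is stored once as an ordered
   pair (i,k), giving the orientation used for theta_ik = theta_i - theta_k. *)
Definition adj (E : seq ('I_n * 'I_n)) : rel 'I_n :=
  fun i k => ((i, k) \in E) || ((k, i) \in E).

Definition is_tree (E : seq ('I_n * 'I_n)) : Prop :=
  [/\ (0 < n)%N /\ uniq E,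
      (forall e, e \in E -> e.1 != e.2),
      (forall e, e \in E -> (e.2, e.1) \notin E),
      size E = n.-1
    & forall i j : 'I_n, connect (adj E) i j].

Definition line_flow (V : 'I_n -> R) (g b : 'I_n -> 'I_n -> R) (i k : 'I_n)
  (th : R) : R * R :=
  (V i ^+ 2 * g i k + V i * V k * b i k * sin th - V i * V k * g i k * cos th,
   V k ^+ 2 * g i k - V i * V k * b i k * sin th - V i * V k * g i k * cos th).

Definition F_theta (V : 'I_n -> R) (g b thlo thhi : 'I_n -> 'I_n -> R)
  (i k : 'I_n) : set (R * R) :=
  [set pq | exists th, thlo i k <= th <= thhi i k /\ pq = line_flow V g b i k th].

(* A f: (A f)_i = sum over lines incident to i of the flow leaving i. Columns of
   A are the directed pairs (i,k),(k,i) for each line (i,k), with A(i,(k,l)) = [i = k]. *)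
Definition A_apply (E : seq ('I_n * 'I_n)) (f : 'I_n * 'I_n -> R * R) : 'I_n -> R :=
  fun i => \sum_(e <- E) ((if e.1 == i then (f e).1 else 0) +
                          (if e.2 == i then (f e).2 else 0)).

Definition A_image (E : seq ('I_n * 'I_n)) (F : 'I_n -> 'I_n -> set (R * R)) :
  set ('I_n -> R) :=
  [set p | exists f : 'I_n * 'I_n -> R * R,
      (forall e, e \in E -> F e.1 e.2 (f e)) /\ p = A_apply E f].

Definition P_theta E V g b thlo thhi : set ('I_n -> R) :=
  A_image E (F_theta V g b thlo thhi).

Definition P_P (Pbar : 'I_n -> R) : set ('I_n -> R) :=
  [set p | forall i, p i <= Pbar i].

Definition hermitian m (W : 'M[R[i]]_m) : Prop :=
  forall a c, W a c = (W c a)^*.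

Definition conjT m p (M : 'M[R[i]]_(m, p)) : 'M[R[i]]_(p, m) := (map_mx conjc M)^T.

Definition psd m (W : 'M[R[i]]_m) : Prop :=
  hermitian W /\ forall x : 'cV[R[i]]_m, 0 <= complex.Re ((conjT x *m W *m x) 0 0).

Definition sub2 (i k : 'I_n) (W : 'M[R[i]]_n) : 'M[R[i]]_2 :=
  \matrix_(a < 2, c < 2)
     W (if a == 0 :> nat then i else k) (if c == 0 :> nat then i else k).

Definition H_edge (V : 'I_n -> R) (thlo thhi : 'I_n -> 'I_n -> R) (i k : 'I_n) :
  set 'M[R[i]]_n :=
  [set W | [/\ hermitian W, psd (sub2 i k W),
             W i i = (V i ^+ 2)%:C, W k k = (V k ^+ 2)%:C
           & tan (thlo i k) * complex.Re (W i k) <= complex.Im (W i k) <= tan (thhi i k) * complex.Re (W i k)]].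

Definition Y_edge (g b : 'I_n -> 'I_n -> R) (i k : 'I_n) : 'M[R[i]]_2 :=
  let y := (g i k) -i* (b i k) in
  \matrix_(a < 2, c < 2) (if a == c then y else - y).

(* closure of convex hull of F_{theta_ik}(v), defined via the SDP relaxation *)
Definition conv_F (V : 'I_n -> R) (g b thlo thhi : 'I_n -> 'I_n -> R)
  (i k : 'I_n) : set (R * R) :=
  [set pq | exists W, H_edge V thlo thhi i k W /\
     let D := sub2 i k W *m conjT (Y_edge g b i k) in
     pq = (complex.Re (D 0 0), complex.Re (D 1 1))].

Definition conv_P_theta E V g b thlo thhi : set ('I_n -> R) :=
  A_image E (conv_F V g b thlo thhi).

Definition pareto (A : set ('I_n -> R)) : set ('I_n -> R) :=
  [set x | A x /\ ~ (exists y, A y /\ (forall i, y i <= x i) /\ exists i, y i < x i)].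

Definition convex_set (S : set ('I_n -> R)) : Prop :=
  forall x y, S x -> S y -> forall t : R, 0 <= t <= 1 ->
    S (fun i => t * x i + (1 - t) * y i).

End PowerNetwork.

(* Main.v *)
Require Import Defs.
From HB Require Import structures.
From mathcomp Require Import all_boot all_order all_algebra.
From mathcomp Require Import all_classical all_reals.
From mathcomp Require Import trigo.
From mathcomp Require Import complex.
From mathcomp Require Import ring lra.
Import Order.TTheory GRing.Theory Num.Theory.
Local Open Scope classical_set_scope.
Local Open Scope ring_scope.
Local Open Scope complex_scope.

Local Notation cRe := complex.Re.
Local Notation cIm := complex.Im.
Section C.
Context {R : realType}.
Implicit Types x y : R[i].
Lemma ReM x y : cRe (x * y) = cRe x * cRe y - cIm x * cIm y.
Proof. by case: x => a b; case: y => c d. Qed.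
Lemma ImM x y : cIm (x * y) = cRe x * cIm y + cIm x * cRe y.
Proof. by case: x => a b; case: y => c d. Qed.
Lemma ReD x y : cRe (x + y) = cRe x + cRe y.
Proof. by case: x => a b; case: y => c d. Qed.
Lemma ImD x y : cIm (x + y) = cIm x + cIm y.
Proof. by case: x => a b; case: y => c d. Qed.
Lemma ReN x : cRe (- x) = - cRe x.
Proof. by case: x => a b. Qed.
Lemma ImN x : cIm (- x) = - cIm x.
Proof. by case: x => a b. Qed.
Lemma Rec x : cRe (x^*) = cRe x. Proof. by case: x. Qed.
Lemma Imc x : cIm (x^*) = - cIm x. Proof. by case: x. Qed.
Lemma ReC (r : R) : cRe (r%:C) = r. Proof. by []. Qed.
Lemma ImC (r : R) : cIm (r%:C) = 0. Proof. by []. Qed.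
Lemma cconjK x : x^*^* = x. Proof. by case: x => a b /=; rewrite opprK. Qed.
Lemma quad2E (M : 'M[R[i]]_2) (x : 'cV[R[i]]_2) :
  (conjT x *m M *m x) 0 0 = (x 0 0)^* * M 0 0 * x 0 0 + (x 0 0)^* * M 0 1 * x 1 0
     + ((x 1 0)^* * M 1 0 * x 0 0 + (x 1 0)^* * M 1 1 * x 1 0).
Proof.
rewrite !mxE !big_ord_recr !big_ord0 /= !mxE !big_ord_recr !big_ord0 /= !mxE.
have E0 : widen_ord (leqnSn 1) ord_max = 0 :> 'I_2 by apply/val_inj.
have E1 : (ord_max : 'I_2) = 1 by apply/val_inj.
rewrite E0 E1; ring.
Qed.

Lemma ReMC (r : R) x : cRe (r%:C * x) = r * cRe x.
Proof. by case: x => a b /=; rewrite mul0r subr0. Qed.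
Lemma ImMC (r : R) x : cIm (r%:C * x) = r * cIm x.
Proof. by case: x => a b /=; rewrite mul0r addr0. Qed.
Lemma conj_comb (t s : R) x y : (t%:C * x + s%:C * y)^* = t%:C * x^* + s%:C * y^*.
Proof. case: x => a b; case: y => c d /=; congr Complex; ring. Qed.
Lemma ReQ (t s : R) x y z w : cRe (x * (t%:C * y + s%:C * z) * w) = t * cRe (x * y * w) + s * cRe (x * z * w).
Proof.
have -> : x * (t%:C * y + s%:C * z) * w = t%:C * (x * y * w) + s%:C * (x * z * w) by ring.
by rewrite ReD !ReMC.
Qed.
Lemma combC (t s u v : R) : t%:C * u%:C + s%:C * v%:C = (t * u + s * v)%:C :> R[i].
Proof. rewrite /=; congr Complex; ring. Qed.
End C.


Lemma sin_aux (R : realType) (s c x y r : R) : s <= 0 -> 0 < c -> s^+2 + c^+2 = 1 ->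
  s / c * x <= y -> x^+2 + y^+2 <= r^+2 -> 0 < r -> s * r <= y.
Proof.
move=> s0 c0 sc H Hb r0.
have h1 : s * x <= c * y.
  have : c * (s / c * x) <= c * y by rewrite ler_pM2l.
  by rewrite mulrA mulrCA divff ?mulr1 // gt_eqF.
have [y0|y0] := lerP 0 y.
  have : s * r <= 0 by rewrite mulr_le0_ge0 // ltW.
  by move=> h; apply: le_trans h y0.
rewrite leNgt; apply/negP => H2.
have h2 : 0 < - (c * y) by rewrite oppr_gt0 pmulr_rlt0.
have h2' : - (c * y) <= - (s * x) by rewrite lerN2.
have h3 : (c * y)^+2 <= (s * x)^+2.
  have h := mulr_ge0 (x := - (s * x) - - (c * y)) (y := - (s * x) + - (c * y)).
  have := h ltac:(lra) ltac:(lra). move=> hh. nra.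
have h4 : (s * x)^+2 <= s^+2 * (r^+2 - y^+2).
  rewrite exprMn ler_wpM2l ?sqr_ge0 //. lra.
have h5 : y^+2 <= (s * r)^+2.
  have e : y^+2 = (c^+2 + s^+2) * y^+2 by rewrite addrC sc mul1r.
  rewrite e. rewrite exprMn in h3 *. lra.
have h6 : s * r <= 0 by rewrite mulr_le0_ge0 // ltW.
have : (s * r)^+2 < y ^+2.
  have h := mulr_gt0 (x := - y - - (s * r)) (y := - y + - (s * r)).
  have := h ltac:(lra) ltac:(lra). move=> hh. nra.
by rewrite ltNge h5.
Qed.


Lemma psd_aux (R : realType) (A B a b c d p q : R) : 0 < A -> p^+2 + q^+2 = A^+2 * B^+2 ->
  0 <= A^+2*(a^+2+b^+2) + 2*(a*(p*c - q*d) + b*(p*d+q*c)) + B^+2*(c^+2+d^+2).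
Proof.
move=> A0 hpq.
have e : A^+2 * (A^+2*(a^+2+b^+2) + 2*(a*(p*c - q*d) + b*(p*d+q*c)) + B^+2*(c^+2+d^+2))
  = (A^+2*a + (p*c - q*d))^+2 + (A^+2*b + (p*d+q*c))^+2 - (p^+2 + q^+2 - A^+2 * B^+2) * (c^+2+d^+2)
  by ring.
rewrite hpq subrr mul0r subr0 in e.
have A2 : 0 < A^+2 by rewrite exprn_gt0.
rewrite -(pmulr_rge0 _ A2) e. by rewrite addr_ge0 ?sqr_ge0.
Qed.

Section Net.
Context {R : realType} {n : nat}.
Implicit Types (V : 'I_n -> R) (g b : 'I_n -> 'I_n -> R).

Lemma D00E g b (i k : 'I_n) (W : 'M[R[i]]_n) :
  cRe ((sub2 i k W *m conjT (Y_edge g b i k)) 0 0) =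
  (cRe (W i i) - cRe (W i k)) * g i k - (cIm (W i i) - cIm (W i k)) * b i k.
Proof.
rewrite !mxE !big_ord_recr big_ord0 /= !mxE /=.
rewrite !ReD !ReM /=; ring.
Qed.

Lemma D11E g b (i k : 'I_n) (W : 'M[R[i]]_n) :
  cRe ((sub2 i k W *m conjT (Y_edge g b i k)) 1 1) =
  (cRe (W k k) - cRe (W k i)) * g i k - (cIm (W k k) - cIm (W k i)) * b i k.
Proof.
rewrite !mxE !big_ord_recr big_ord0 /= !mxE /=.
rewrite !ReD !ReM /=; ring.
Qed.

Lemma psd_bound (i k : 'I_n) (W : 'M[R[i]]_n) (A B : R) :
  psd (sub2 i k W) -> W i i = (A^+2)%:C -> W k k = (B^+2)%:C -> 0 < B ->
  cRe (W i k)^+2 + cIm (W i k)^+2 <= A^+2 * B^+2.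
Proof.
case=> Hh Hq Hii Hkk B0.
have Hki : W k i = (W i k)^*.
  by have := Hh 1 0; rewrite !mxE /=.
have := Hq (\col_j (if j == 0 :> nat then (B^+2)%:C else - (W i k)^*)).
rewrite quad2E !mxE /= Hii Hkk Hki.
case: (W i k) => x y /= H.
have HB : 0 < B^+2 by rewrite exprn_gt0.
nra.
Qed.

Lemma dom_edge V g b lo hi (i k : 'I_n) pq :
  0 < V i -> 0 < V k -> 0 <= g i k ->
  -(pi/2) < lo i k -> lo i k <= 0 -> 0 <= hi i k -> hi i k < pi/2 ->
  conv_F V g b lo hi i k pq ->
  exists pq', F_theta V g b lo hi i k pq' /\ pq'.1 <= pq.1 /\ pq'.2 <= pq.2.
Proof.
move=> Vi Vk g0 lo1 lo2 hi1 hi2 [W [[Hh Hpsd Hii Hkk /andP[Hlo Hhi]] ->]].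
have Hki : W k i = (W i k)^* by rewrite Hh.
have Hb := @psd_bound i k W (V i) (V k) Hpsd Hii Hkk Vk.
rewrite /= D00E D11E Hii Hkk Hki Rec Imc /=.
move: Hb Hlo Hhi; rewrite /tan; case: (W i k) => x y /= Hb Hlo Hhi.
set r := V i * V k.
have r0 : 0 < r by rewrite mulr_gt0.
have Hb' : x^+2 + y^+2 <= r^+2 by rewrite /r exprMn.
set z := y / r.
have zr : z * r = y by rewrite /z divfK // gt_eqF.
have z1 : -1 <= z <= 1.
  have hy : y^+2 <= r^+2 by have := sqr_ge0 x; lra.
  rewrite /z ler_pdivlMr // ler_pdivrMr // mul1r mulN1r.
  have h := mulr_ge0 (x := r - y) (y := r + y).
  apply/andP; split; rewrite leNgt; apply/negP => hc.
    have : r^+2 < y^+2.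
      have h2 := mulr_gt0 (x := - y - r) (y := - y + r).
      have := h2 ltac:(lra) ltac:(lra). nra.
    by rewrite ltNge hy.
  have : r^+2 < y^+2.
    have h2 := mulr_gt0 (x := y - r) (y := y + r).
    have := h2 ltac:(lra) ltac:(lra). nra.
  by rewrite ltNge hy.
have zin : z \in `[-1, 1] by rewrite in_itv /=.
have sz : sin (asin z) = z := asinK zin.
have cz := cos_asin z1.
have cz0 : 0 <= cos (asin z) by rewrite cz sqrtr_ge0.
have cz2 : cos (asin z) ^+ 2 = 1 - z^+2.
  rewrite cz sqr_sqrtr //. have := z1; nra.
have xr : x <= r * cos (asin z).
  have [x0|x0] := lerP x 0; first by apply: (le_trans x0); rewrite mulr_ge0 // ltW.
  have e : (r * cos (asin z))^+2 = r^+2 - y^+2.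
    rewrite exprMn cz2 -zr. ring.
  rewrite leNgt; apply/negP => hc.
  have h2 := mulr_gt0 (x := x - r * cos (asin z)) (y := x + r * cos (asin z)).
  have := h2 ltac:(lra) ltac:(have := mulr_ge0 (ltW r0) cz0; lra). nra.
have pihalf0 : 0 < pi / 2 :> R by rewrite divr_gt0 // pi_gt0.
have inI : forall t : R, -(pi/2) < t < pi/2 -> t \in `[-(pi/2), pi/2].
  by move=> t /andP[t1 t2]; rewrite in_itv /= !ltW.
have ain : asin z \in `[-(pi/2), pi/2].
  by rewrite in_itv /= asin_geNpi2 // asin_lepi2.
have h0 : (0:R) \in `[-(pi/2), pi/2] by rewrite in_itv /=; lra.
have hlo : lo i k \in `[-(pi/2), pi/2] by apply: inI; rewrite lo1 /=; lra.
have hhi : hi i k \in `[-(pi/2), pi/2] by apply: inI; rewrite hi2 andbT; lra.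
have coslo : 0 < cos (lo i k) by rewrite cos_gt0_pihalf // lo1 /=; lra.
have coshi : 0 < cos (hi i k) by rewrite cos_gt0_pihalf // hi2 andbT; lra.
exists (line_flow V g b i k (asin z)); split.
  exists (asin z); split => //; apply/andP; split.
    rewrite leNgt; apply/negP => hc.
    move: hc; rewrite -ltr_sin //.
    rewrite sz ltNge ler_pdivlMr //.
    have -> // : sin (lo i k) * r <= y.
    apply: (@sin_aux R _ _ _ _ _ _ coslo _ Hlo Hb' r0).
      rewrite leNgt; apply/negP => hs.
      have : sin 0 < sin (lo i k) by rewrite sin0.
      rewrite ltr_sin //; lra.
    by rewrite addrC cos2Dsin2.
  rewrite leNgt; apply/negP => hc.
  move: hc; rewrite -ltr_sin //.
  rewrite sz ltNge ler_pdivrMr //.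
  have -> // : y <= sin (hi i k) * r.
  have : (- sin (hi i k)) * r <= - y.
    apply: (@sin_aux R _ _ _ _ _ _ coshi _ _ _ r0).
    - rewrite oppr_le0 leNgt; apply/negP => hs.
      have : sin (hi i k) < sin 0 by rewrite sin0.
      rewrite ltr_sin //; lra.
    - by rewrite sqrrN addrC cos2Dsin2.
    - rewrite mulNr mulNr lerN2; exact: Hhi.
    - by rewrite sqrrN.
  lra.
rewrite /line_flow /= sz -/r.
have e1 : r * b i k * z = b i k * y by rewrite -zr; ring.
split.
  rewrite e1. have := ler_wpM2l g0 xr. lra.
rewrite e1. have := ler_wpM2l g0 xr. lra.
Qed.

Lemma sub2E (i k : 'I_n) (W : 'M[R[i]]_n) :
  (sub2 i k W 0 0 = W i i) * (sub2 i k W 0 1 = W i k) * (sub2 i k W 1 0 = W k i)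
   * (sub2 i k W 1 1 = W k k).
Proof. by rewrite !mxE. Qed.

Lemma herm_sub2 (i k : 'I_n) (W : 'M[R[i]]_n) : Defs.hermitian W -> Defs.hermitian (sub2 i k W).
Proof. by move=> Hh a c; rewrite !mxE Hh. Qed.

Lemma F_in_conv V g b lo hi (i k : 'I_n) pq :
  i != k -> 0 < V i -> 0 < V k -> -(pi/2) < lo i k -> hi i k < pi/2 ->
  F_theta V g b lo hi i k pq -> conv_F V g b lo hi i k pq.
Proof.
move=> ik Vi Vk lo1 hi2 [th [/andP[t1 t2] ->]].
set r := V i * V k.
have r0 : 0 < r by rewrite mulr_gt0.
set w : R[i] := (r * cos th) +i* (r * sin th).
pose W : 'M[R[i]]_n := \matrix_(a, c) (if a == c then (V a ^+ 2)%:C else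
   if (a == i) && (c == k) then w else if (a == k) && (c == i) then w^* else 0).
have Wii : W i i = (V i^+2)%:C by rewrite mxE eqxx.
have Wkk : W k k = (V k^+2)%:C by rewrite mxE eqxx.
have Wik : W i k = w by rewrite mxE (negbTE ik) !eqxx.
have Wki : W k i = w^* by rewrite mxE eq_sym (negbTE ik) !eqxx.
have Hh : Defs.hermitian W.
{ move=> a c; rewrite !mxE.
  have [->|ac] := eqVneq a c; first by rewrite /= oppr0.
  idtac.
  have [ai|ai] := eqVneq a i; have [ck|ck] := eqVneq c k;
  have [ak|ak] := eqVneq a k; have [ci|ci] := eqVneq c i => //=;
    rewrite ?cconjK //; subst => //=; try by rewrite oppr0.
  all: try by rewrite /w /= opprK.
  all: by move: ac; rewrite eqxx. }
rewrite /conv_F /=. exists W; split.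
  split => //.
    split; first by apply: herm_sub2.
    move=> x; rewrite quad2E !sub2E Wii Wik Wki Wkk.
    case: (x 0 0) => a b'; case: (x 1 0) => c d /=.
    have hpq : (r * cos th)^+2 + (r * sin th)^+2 = V i ^+2 * V k ^+2.
      by rewrite !exprMn -mulrDr cos2Dsin2 mulr1.
    have := @psd_aux R _ _ a b' c d _ _ Vi hpq. lra.
  have thin : th \in `](-(pi/2)), pi/2[ by rewrite in_itv /=; apply/andP; split; lra.
  have loin : lo i k \in `](-(pi/2)), pi/2[ by rewrite in_itv /=; apply/andP; split; lra.
  have hiin : hi i k \in `](-(pi/2)), pi/2[ by rewrite in_itv /=; apply/andP; split; lra.
  have cth : 0 < cos th by rewrite cos_gt0_pihalf //; apply/andP; split; lra.
  have rc : 0 < r * cos th by rewrite mulr_gt0.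
  have e : tan th * (r * cos th) = r * sin th.
    by rewrite /tan mulrCA divfK ?gt_eqF.
  rewrite Wik /=; apply/andP; split.
    rewrite -e ler_pM2r //.
    rewrite leNgt; apply/negP => h; move: h; rewrite ltr_tan //; lra.
  rewrite -e ler_pM2r //.
  rewrite leNgt; apply/negP => h; move: h; rewrite ltr_tan //; lra.
rewrite /= D00E D11E Wii Wik Wki Wkk /line_flow /=.
congr pair; rewrite /r; ring.
Qed.
Lemma pareto_eq (S T : set ('I_n -> R)) : S `<=` T ->
  (forall t, T t -> exists s, S s /\ forall i, s i <= t i) -> pareto S = pareto T.
Proof.
move=> ST dom; apply/seteqP; split => x [Sx Hx].
  split; first exact: ST.
  move=> [y [Ty [yx [i yi]]]].
  have [s [Ss sy]] := dom y Ty.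
  apply: Hx; exists s; split => //; split; first by move=> j; exact: le_trans (sy j) (yx j).
  by exists i; exact: le_lt_trans (sy i) yi.
have [s [Ss sx]] := dom x Sx.
have es : s = x.
  apply/funext => i; apply/eqP; rewrite eq_le sx /=.
  rewrite leNgt; apply/negP => hi; apply: Hx.
  by exists s; split; [exact: ST | split => //; exists i].
rewrite -es; split => //.
move=> [y [Sy [ys [i yi]]]]; apply: Hx; exists y; split; first exact: ST.
by rewrite -es; split => //; exists i.
Qed.

Lemma A_mono (E : seq ('I_n * 'I_n)) (f f' : 'I_n * 'I_n -> R * R) :
  (forall e, e \in E -> (f' e).1 <= (f e).1 /\ (f' e).2 <= (f e).2) ->
  forall i, A_apply E f' i <= A_apply E f i.
Proof.
move=> H i; rewrite /A_apply big_seq [X in _ <= X]big_seq; apply: ler_sum => e he.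
have [h1 h2] := H e he.
by apply: lerD; case: ifP.
Qed.

Lemma A_comb (E : seq ('I_n * 'I_n)) (f f' : 'I_n * 'I_n -> R * R) (t s : R) i :
  A_apply E (fun e => (t * (f e).1 + s * (f' e).1, t * (f e).2 + s * (f' e).2)) i
  = t * A_apply E f i + s * A_apply E f' i.
Proof.
rewrite /A_apply !mulr_sumr -big_split; apply: eq_bigr => e _ /=.
by case: ifP => _; case: ifP => _; ring.
Qed.
Lemma conv_F_comb V V' V'' g b lo hi (i k : 'I_n) pq pq' (t s : R) :
  0 <= t -> 0 <= s -> V'' i ^+2 = t * V i ^+2 + s * V' i ^+2 ->
  V'' k ^+2 = t * V k^+2 + s * V' k^+2 ->
  conv_F V g b lo hi i k pq -> conv_F V' g b lo hi i k pq' ->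
  conv_F V'' g b lo hi i k (t * pq.1 + s * pq'.1, t * pq.2 + s * pq'.2).
Proof.
move=> t0 s0 ei ek [W [[Hh [_ Hq] Hii Hkk /andP[l1 h1]] ->]]
  [W' [[Hh' [_ Hq'] Hii' Hkk' /andP[l1' h1']] ->]].
pose W'' : 'M[R[i]]_n := \matrix_(a, c) (t%:C * W a c + s%:C * W' a c).
have W''E : forall a c, W'' a c = t%:C * W a c + s%:C * W' a c by move=> a c; rewrite mxE.
have Hh'' : Defs.hermitian W''.
  by move=> a c; rewrite !W''E conj_comb [W a c]Hh [W' a c]Hh'.
rewrite /conv_F /=; exists W''; split.
  split => //.
  - split; first by apply: herm_sub2.
    move=> x; have q := Hq x; have q' := Hq' x.
    move: q q'; rewrite !quad2E !sub2E !W''E !ReD !ReQ => q q'.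
    have := mulr_ge0 t0 q; have := mulr_ge0 s0 q'. lra.
  - by rewrite W''E Hii Hii' ei combC.
  - by rewrite W''E Hkk Hkk' ek combC.
  - rewrite W''E ReD ImD !ReMC !ImMC; apply/andP; split.
      have := ler_wpM2l t0 l1; have := ler_wpM2l s0 l1'. lra.
    have := ler_wpM2l t0 h1; have := ler_wpM2l s0 h1'. lra.
rewrite /= !D00E !D11E !W''E !ReD !ImD !ReMC !ImMC.
congr pair; ring.
Qed.
End Net.


Local Close Scope complex_scope.

Theorem lemma4 (R : realType) (n : nat) (E : seq ('I_n * 'I_n))
  (g b thlo thhi : 'I_n -> 'I_n -> R) (Pbar : 'I_n -> R) :
  is_tree E ->
  (forall e, e \in E ->
     [/\ 0 <= g e.1 e.2 /\ 0 <= b e.1 e.2,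
         thlo e.1 e.2 <= 0, 0 <= thhi e.1 e.2,
         - (pi / 2) < thlo e.1 e.2 < pi / 2
       & - (pi / 2) < thhi e.1 e.2 < pi / 2]) ->
  (forall V : 'I_n -> R, (forall i, 0 < V i) ->
     pareto (P_theta E V g b thlo thhi) =
       pareto (conv_P_theta E V g b thlo thhi) /\
     pareto (P_theta E V g b thlo thhi `&` P_P Pbar) =
       pareto (conv_P_theta E V g b thlo thhi `&` P_P Pbar)) /\
  (forall vlo vhi : 'I_n -> R, (forall i, 0 < vlo i /\ vlo i <= vhi i) ->
     convex_set [set p | exists V : 'I_n -> R,
                   (forall i, vlo i <= V i <= vhi i) /\
                   conv_P_theta E V g b thlo thhi p]).
Proof.
move=> [[n0 uE] Hneq Hsym Hsz Hconn] He.
split.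
- move=> V V0.
  have sub : P_theta E V g b thlo thhi `<=` conv_P_theta E V g b thlo thhi.
    move=> p [f [Hf ->]]; exists f; split => // e he.
    have [[g0 b0] l0 h0 /andP[l1 l2] /andP[h1 h2]] := He e he.
    by apply: F_in_conv => //; [exact: Hneq | exact: Hf].
  have dom : forall p, conv_P_theta E V g b thlo thhi p ->
      exists q, P_theta E V g b thlo thhi q /\ forall i, q i <= p i.
    move=> p [f [Hf ->]].
    have : forall e, exists y, e \in E -> F_theta V g b thlo thhi e.1 e.2 y /\
        y.1 <= (f e).1 /\ y.2 <= (f e).2.
      move=> e; have [he|he] := boolP (e \in E); last by exists (f e).
      have [[g0 b0] l0 h0 /andP[l1 l2] /andP[h1 h2]] := He e he.
      have [y [Fy [y1 y2]]] := @dom_edge R n V g b thlo thhi e.1 e.2 (f e) (V0 e.1) (V0 e.2) g0 l1 l0 h0 h2 (Hf e he).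
      by exists y.
    move=> /choice [f' Hf'].
    exists (A_apply E f'); split.
      by exists f'; split => // e he; have [] := Hf' e he.
    by apply: A_mono => e he; have [_ []] := Hf' e he.
  split; first exact: pareto_eq.
  apply: pareto_eq.
    by move=> p [Pp PPp]; split => //; exact: sub.
  move=> p [cp PPp]; have [q [Pq qp]] := dom p cp.
  exists q; split => //; split => // i; exact: le_trans (qp i) (PPp i).
- move=> vlo vhi Hv p p' [V [HV [f [Hf ->]]]] [V' [HV' [f' [Hf' ->]]]] t /andP[t0 t1].
  have s0 : 0 <= 1 - t by rewrite subr_ge0.
  pose V'' := fun i => Num.sqrt (t * V i ^+2 + (1 - t) * V' i ^+2).
  have arg0 : forall i, 0 <= t * V i ^+2 + (1 - t) * V' i ^+2.
    by move=> i; rewrite addr_ge0 // mulr_ge0 // sqr_ge0.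
  have EV : forall i, V'' i ^+2 = t * V i ^+2 + (1 - t) * V' i ^+2.
    by move=> i; rewrite /V'' sqr_sqrtr.
  exists V''; split.
    move=> i; have [lo0 lohi] := Hv i.
    have /andP[a1 a2] := HV i; have /andP[a1' a2'] := HV' i.
    have q1 : vlo i ^+2 <= V i ^+2 by nra.
    have q1' : vlo i ^+2 <= V' i ^+2 by nra.
    have q2 : V i ^+2 <= vhi i ^+2 by nra.
    have q2' : V' i ^+2 <= vhi i ^+2 by nra.
    have lo2 : vlo i ^+2 <= t * V i ^+2 + (1 - t) * V' i ^+2.
      have := ler_wpM2l t0 q1; have := ler_wpM2l s0 q1'. lra.
    have hi2 : t * V i ^+2 + (1 - t) * V' i ^+2 <= vhi i ^+2.
      have := ler_wpM2l t0 q2; have := ler_wpM2l s0 q2'. lra.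
    have vhi0 : 0 <= vhi i by lra.
    apply/andP; split.
      by rewrite -(ger0_norm (ltW lo0)) -sqrtr_sqr /V'' ler_sqrt.
    by rewrite -(ger0_norm vhi0) -sqrtr_sqr /V'' ler_sqrt // sqr_ge0.
  exists (fun e => (t * (f e).1 + (1 - t) * (f' e).1, t * (f e).2 + (1 - t) * (f' e).2)).
  split.
    by move=> e he; apply: conv_F_comb => //; [exact: Hf | exact: Hf'].
  by apply/funext => i /=; rewrite A_comb.
Qed.
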